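(* Let $\theta$ be uniformly distributed on $[0,2\pi]$, let $k\in\{1,2,3\}$ and $W=e^{-i\theta\sigma_k}$. Let $A,C$ be arbitrary linear operators on $\mathbb{C}^2$ and let $B=D=\sigma_j$ for some $j\in\{0,1,2,3\}$. Then $$\mathbb{E}_\theta\,\text{Tr}[WAW^\dagger B]\,\text{Tr}[WCW^\dagger D]=\Big[\tfrac12+\tfrac{\delta_{j0}+\delta_{jk}}{2}\Big]\text{Tr}[AB]\,\text{Tr}[CD]+\Big[-\tfrac12+\tfrac{\delta_{j0}+\delta_{jk}}{2}\Big]\text{Tr}[AB\sigma_k]\,\text{Tr}[CD\sigma_k].$$
   Context: $\sigma_0=I$, $\sigma_1,\sigma_2,\sigma_3$ are the Pauli matrices $X,Y,Z$; $\delta$ is the Kronecker delta; $\mathbb{E}_\theta g=\frac1{2\pi}\int_0^{2\pi}g\,d\theta$. *)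

(* Defs.v *)
From HB Require Import structures.
From mathcomp Require Import all_boot all_order all_algebra.
From mathcomp Require Import all_classical all_reals all_analysis.
From mathcomp Require Import complex.
Set Implicit Arguments. Unset Strict Implicit. Unset Printing Implicit Defensive.
Import Order.TTheory GRing.Theory Num.Theory.
Local Open Scope ring_scope.
Local Open Scope complex_scope.

Section Defs.
Variable R : realType.
Local Notation C := R[i].
Local Notation M2 := 'M[C]_2.

Definition pauli (j : 'I_4) : M2 :=
  match val j with
  | 0 => \matrix_(a < 2, b < 2) (if a == b then 1 else 0)
  | 1 => \matrix_(a < 2, b < 2) (if a == b then 0 else 1)
  | 2 => \matrix_(a < 2, b < 2)
           (if a == b then 0 else if (val a == 0)%N then - 'i else 'i)
  | _ => \matrix_(a < 2, b < 2)
           (if a == b then (if (val a == 0)%N then 1 else -1) else 0)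
  end.

Definition adj (A : M2) : M2 := (map_mx (@conjc R) A)^T.

(* W = exp(-i theta sigma_k); since sigma_k^2 = I (k = 1,2,3),
   exp(-i theta sigma_k) = cos theta I - i sin theta sigma_k. *)
Definition Wrot (k : 'I_4) (theta : R) : M2 :=
  (cos theta)%:C *: 1%:M - ('i * (sin theta)%:C) *: pauli k.

Definition Etheta (g : R -> C) : C :=
  ((2 * pi)^-1)%:C *
  ((Rintegral lebesgue_measure `[0, 2 * pi]%classic (fun t => complex.Re (g t)))
   +i* (Rintegral lebesgue_measure `[0, 2 * pi]%classic (fun t => complex.Im (g t)))).

Definition kdelta (a b : 'I_4) : C := if a == b then 1 else 0.

End Defs.

(* Main.v *)
Require Import Defs.
From HB Require Import structures.
From mathcomp Require Import all_boot all_order all_algebra.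
From mathcomp Require Import all_classical all_reals all_analysis.
From mathcomp Require Import complex.
From mathcomp Require Import ring lra.
Import Order.TTheory GRing.Theory Num.Theory.
Local Open Scope ring_scope.
Local Open Scope complex_scope.

Module Trig.
Import numFieldNormedType.Exports.
Local Open Scope classical_set_scope.
Section S.
Variable R : realType.
Lemma mod_trig (x : R) (Q L Rr : R) : L - Rr = (cos x ^+2 + sin x ^+2 - 1) * Q -> L = Rr.
Proof. by rewrite cos2Dsin2 subrr mul0r => /eqP; rewrite subr_eq0 => /eqP. Qed.
Lemma addE (a b : Real_sort__canonical__normed_module_NormedModule R) : a + b = (a : R) + (b : R).
Proof. by []. Qed.
Lemma scE (a b : R) : a *: b = a * b. Proof. by []. Qed.

Lemma der_cont (F : R -> R) (dF : forall x, derivable F x 1) : continuous F.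
Proof. by move=> x; apply: differentiable_continuous; apply/derivable1_diffP. Qed.

Lemma ftc_2pi (f F : R -> R) (df : forall x : R, is_derive x (1:R) F (f x)) (cf : continuous f) :
  Rintegral lebesgue_measure `[0, 2 * pi] f = F (2 * pi) - F 0.
Proof.
have dF : forall x, derivable F x 1 by move=> x; exact: ex_derive.
have cF := @der_cont F dF.
rewrite /Rintegral (@continuous_FTC2 R f F 0 (2 * pi)) //.
- by rewrite mulr_gt0 // pi_gt0.
- exact: continuous_subspaceT.
- split.
  + by move=> x _; exact: dF.
  + exact/cvg_at_right_filter/cF.
  + exact/cvg_at_left_filter/cF.
- by move=> x _; rewrite derive1E; exact: derive_val.
Qed.

Notation cs := (@cos R). Notation sn := (@sin R).
Definition G0 : R -> R := (3/8 : R) *: id + (1/4 : R) *: (cs ^+ 3 * sn) + (3/8 : R) *: (cs * sn).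
Definition G1 : R -> R := (3/8 : R) *: id - (1/4 : R) *: (cs * sn ^+ 3) - (3/8 : R) *: (cs * sn).
Definition G2 : R -> R := (1/8 : R) *: id + (1/8 : R) *: (cs * sn) - (1/4 : R) *: (cs ^+ 3 * sn).
Definition G3 : R -> R := (-1/4 : R) *: cs ^+ 4.
Definition G4 : R -> R := (1/4 : R) *: sn ^+ 4.

Lemma dG0 (x : R) : is_derive x (1:R) G0 (cos x ^+ 4).
Proof.
rewrite /G0; apply: (is_derive_eq (is_deriveD (is_deriveD (is_deriveZ (3/8 : R) (is_derive_id x 1)) (is_deriveZ (1/4 : R) (is_deriveM (is_deriveX 3 (is_derive_cos x)) (is_derive_sin x)))) (is_deriveZ (3/8 : R) (is_deriveM (is_derive_cos x) (is_derive_sin x))))).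
rewrite !exprfctE /= !scE; apply: (mod_trig x (- 3/4 * cos x ^+2 - 3/8)).
rewrite !addE; field; done.
Qed.
Lemma dG1 (x : R) : is_derive x (1:R) G1 (sin x ^+ 4).
Proof.
rewrite /G1; apply: (is_derive_eq (is_deriveB (is_deriveB (is_deriveZ (3/8 : R) (is_derive_id x 1)) (is_deriveZ (1/4 : R) (is_deriveM (is_derive_cos x) (is_deriveX 3 (is_derive_sin x))))) (is_deriveZ (3/8 : R) (is_deriveM (is_derive_cos x) (is_derive_sin x))))).
rewrite !exprfctE /= !scE; apply: (mod_trig x (- 3/4 * sin x ^+2 - 3/8)).
rewrite !addE; field; done.
Qed.
Lemma dG2 (x : R) : is_derive x (1:R) G2 (cos x ^+ 2 * sin x ^+ 2).
Proof.
rewrite /G2; apply: (is_derive_eq (is_deriveB (is_deriveD (is_deriveZ (1/8 : R) (is_derive_id x 1)) (is_deriveZ (1/8 : R) (is_deriveM (is_derive_cos x) (is_derive_sin x)))) (is_deriveZ (1/4 : R) (is_deriveM (is_deriveX 3 (is_derive_cos x)) (is_derive_sin x))))).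
rewrite !exprfctE /= !scE; apply: (mod_trig x (- 1/4 * cos x ^+2 - 1/8)).
rewrite !addE; field; done.
Qed.
Lemma dG3 (x : R) : is_derive x (1:R) G3 (cos x ^+ 3 * sin x).
Proof.
rewrite /G3; apply: (is_derive_eq (is_deriveZ (-1/4 : R) (is_deriveX 4 (is_derive_cos x)))).
rewrite ?exprfctE /= ?scE; field; done.
Qed.
Lemma dG4 (x : R) : is_derive x (1:R) G4 (cos x * sin x ^+ 3).
Proof.
rewrite /G4; apply: (is_derive_eq (is_deriveZ (1/4 : R) (is_deriveX 4 (is_derive_sin x)))).
rewrite ?exprfctE /= ?scE; field; done.
Qed.

Lemma trig_int (a0 a1 a2 a3 a4 : R) :
  Rintegral lebesgue_measure `[0, 2 * pi] (fun t => a0 * cos t ^+ 4 + a1 * sin t ^+ 4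
     + a2 * (cos t ^+ 2 * sin t ^+ 2) + a3 * (cos t ^+ 3 * sin t) + a4 * (cos t * sin t ^+ 3))
  = 2 * pi * (3/8 * a0 + 3/8 * a1 + 1/8 * a2).
Proof.
pose fF : R -> R := a0 *: cs ^+ 4 + a1 *: sn ^+ 4 + a2 *: (cs ^+ 2 * sn ^+ 2)
   + a3 *: (cs ^+ 3 * sn) + a4 *: (cs * sn ^+ 3).
pose F : R -> R := a0 *: G0 + a1 *: G1 + a2 *: G2 + a3 *: G3 + a4 *: G4.
transitivity (Rintegral lebesgue_measure `[0, 2 * pi] fF).
  by congr Rintegral.
have dF : forall x : R, is_derive x (1:R) F (fF x).
  move=> x; apply: (is_derive_eq (is_deriveD (is_deriveD (is_deriveD (is_deriveD (is_deriveZ a0 (@dG0 x)) (is_deriveZ a1 (@dG1 x))) (is_deriveZ a2 (@dG2 x))) (is_deriveZ a3 (@dG3 x))) (is_deriveZ a4 (@dG4 x)))).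
  by rewrite /fF !exprfctE /= !scE.
have cF : continuous fF.
  apply: der_cont => x; have H := (is_deriveD (is_deriveD (is_deriveD (is_deriveD (is_deriveZ a0 (is_deriveX 4 (is_derive_cos x))) (is_deriveZ a1 (is_deriveX 4 (is_derive_sin x)))) (is_deriveZ a2 (is_deriveM (is_deriveX 2 (is_derive_cos x)) (is_deriveX 2 (is_derive_sin x))))) (is_deriveZ a3 (is_deriveM (is_deriveX 3 (is_derive_cos x)) (is_derive_sin x)))) (is_deriveZ a4 (is_deriveM (is_derive_cos x) (is_deriveX 3 (is_derive_sin x))))); exact: ex_derive.
rewrite (@ftc_2pi _ _ dF cF).
have FE : forall t, F t = a0 * (3/8 * t + 1/4 * (cos t ^+ 3 * sin t) + 3/8 * (cos t * sin t))
   + a1 * (3/8 * t - 1/4 * (cos t * sin t ^+ 3) - 3/8 * (cos t * sin t))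
   + a2 * (1/8 * t + 1/8 * (cos t * sin t) - 1/4 * (cos t ^+ 3 * sin t))
   + a3 * (-1/4 * cos t ^+ 4) + a4 * (1/4 * sin t ^+ 4).
  move=> t; rewrite /F /G0 /G1 /G2 /G3 /G4 ?exprfctE. done.
rewrite !FE.
have c2 : cos (2 * pi) = 1 :> R by rewrite mulr_natl cos2pi.
have s2 : sin (2 * pi) = 0 :> R by rewrite mulr_natl sin2pi.
rewrite c2 s2 cos0 sin0.
field; done.
Qed.

End S.
End Trig.

Section T.
Variable R : realType.
Local Notation C := R[i].
Lemma tr2 (M : 'M[C]_2) : \tr M = M 0 0 + M 1 1.
Proof. rewrite /mxtrace !big_ord_recl big_ord0 addr0. by have -> : lift ord0 ord0 = 1 :> 'I_2 by apply/val_inj. Qed.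
Lemma mul2E (M N : 'M[C]_2) i j : (M *m N) i j = M i 0 * N 0 j + M i 1 * N 1 j.
Proof. rewrite !mxE !big_ord_recl big_ord0 addr0. by have -> : lift ord0 ord0 = 1 :> 'I_2 by apply/val_inj. Qed.
Lemma ii : 'i * 'i = -1 :> C.
Proof. rewrite /GRing.mul /=. congr (_ +i* _); ring. Qed.

Lemma conji : ('i : C)^* = - 'i.
Proof. by rewrite /conjc /GRing.opp /=; congr (_ +i* _); rewrite oppr0. Qed.

Lemma pauli_herm (k : 'I_4) (i j : 'I_2) : (pauli R k j i)^* = pauli R k i j.
Proof.
case: k => [[|[|[|[|k]]]] hk] //; case: i => [[|[|i]] hi] //; case: j => [[|[|j]] hj] //;
  rewrite /pauli /= !mxE /= ?rmorph0 ?rmorph1 ?rmorphN ?conji ?opprK //.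
all: apply/eqP; rewrite eq_complex /= ?oppr0 ?opprK ?eqxx //.
Qed.

Lemma adjW (k : 'I_4) t : adj (Wrot k t) = (cos t)%:C *: 1%:M + ('i * (sin t)%:C) *: pauli R k.
Proof.
apply/matrixP => i j; rewrite /adj /Wrot !mxE.
case: k => [[|[|[|[|k]]]] hk] //; case: i => [[|[|i]] hi] //; case: j => [[|[|j]] hj] //;
  rewrite /pauli /= ?mxE /=; apply/eqP; rewrite eq_complex /=; apply/andP; split; apply/eqP; ring.
Qed.


Lemma trW (k : 'I_4) (hk : k != 0) (t : R) (A B : 'M[C]_2) : \tr (Wrot k t *m A *m adj (Wrot k t) *m B) =
  ((cos t)^+2)%:C * \tr (A *m B) + ((sin t)^+2)%:C * \tr (pauli R k *m A *m pauli R k *m B)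
  + 'i * (cos t * sin t)%:C * \tr (A *m pauli R k *m B - pauli R k *m A *m B).
Proof.
rewrite adjW; case: k hk => [[|[|[|[|k]]]] hk] // _;
 rewrite !tr2 !(mul2E, mxE) /pauli /= ?mxE /= !rmorphXn !rmorphM; ring: ii.
Qed.


Lemma Etheta_trig (P0 P1 P2 P3 P4 : C) (g : R -> C)
  (hg : forall t, g t = P0 * (cos t ^+ 4)%:C + P1 * (sin t ^+ 4)%:C + P2 * (cos t ^+ 2 * sin t ^+ 2)%:C
     + P3 * (cos t ^+ 3 * sin t)%:C + P4 * (cos t * sin t ^+ 3)%:C) :
  Etheta g = (3/8 : R)%:C * P0 + (3/8 : R)%:C * P1 + (1/8 : R)%:C * P2.
Proof.
move: P0 P1 P2 P3 P4 hg => [x0 y0] [x1 y1] [x2 y2] [x3 y3] [x4 y4] hg.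
have hRe : (fun t => complex.Re (g t)) = (fun t => x0 * cos t ^+ 4 + x1 * sin t ^+ 4
     + x2 * (cos t ^+ 2 * sin t ^+ 2) + x3 * (cos t ^+ 3 * sin t) + x4 * (cos t * sin t ^+ 3)).
  by apply/funext => t; rewrite hg /=; ring.
have hIm : (fun t => complex.Im (g t)) = (fun t => y0 * cos t ^+ 4 + y1 * sin t ^+ 4
     + y2 * (cos t ^+ 2 * sin t ^+ 2) + y3 * (cos t ^+ 3 * sin t) + y4 * (cos t * sin t ^+ 3)).
  by apply/funext => t; rewrite hg /=; ring.
rewrite /Etheta hRe hIm !Trig.trig_int.
have hp := @pi_gt0 R; move: (pi : R) hp => p hp.
apply/eqP; rewrite eq_complex /=; apply/andP; split; apply/eqP; field.
all: by apply: lt0r_neq0.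
Qed.
End T.


Section F.
Variable R : realType.
Local Notation C := R[i].

Lemma pw (x y a0 a1 a2 e0 e1 e2 : C) :
  (x ^+ 2 * a0 + y ^+ 2 * a1 + 'i * (x * y) * a2) * (x ^+ 2 * e0 + y ^+ 2 * e1 + 'i * (x * y) * e2) =
  (a0 * e0) * x ^+ 4 + (a1 * e1) * y ^+ 4 + (a0 * e1 + a1 * e0 - a2 * e2) * (x ^+ 2 * y ^+ 2)
  + ('i * (a0 * e2 + a2 * e0)) * (x ^+ 3 * y) + ('i * (a1 * e2 + a2 * e1)) * (x * y ^+ 3).
Proof. ring: (@ii R). Qed.

Lemma trfacts (S T A : 'M[C]_2) (eps : C) (hS : S *m S = 1%:M) (hST : S *m T = eps *: (T *m S)) :
  \tr (S *m A *m S *m T) = eps * \tr (A *m T) /\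
  \tr (A *m S *m T - S *m A *m T) = (eps - 1) * \tr (A *m T *m S).
Proof.
split.
  have -> : S *m A *m S *m T = S *m (A *m (S *m T)) by rewrite !mulmxA.
  rewrite mxtrace_mulC hST -scalemxAr -scalemxAl mxtraceZ; congr (_ * _).
  by rewrite !mulmxA -(mulmxA _ S S) hS mulmx1.
rewrite raddfB /=.
have -> : A *m S *m T = eps *: (A *m T *m S) by rewrite -mulmxA hST -scalemxAr mulmxA.
have -> : \tr (S *m A *m T) = \tr (A *m T *m S) by rewrite -mulmxA mxtrace_mulC.
rewrite mxtraceZ; ring.
Qed.

Lemma fin (eps d a0 tA e0 tC : C) (h : (eps = 1 /\ d = 1) \/ (eps = -1 /\ d = 0)) :
  (3 / 8 : R)%:C * (a0 * e0) + (3 / 8 : R)%:C * (eps * a0 * (eps * e0)) +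
  (1 / 8 : R)%:C * (a0 * (eps * e0) + eps * a0 * e0 - (eps - 1) * tA * ((eps - 1) * tC)) =
  (2^-1 + d / 2) * a0 * e0 + (- 2^-1 + d / 2) * tA * tC.
Proof.
rewrite !rmorphM !fmorphV !rmorph_nat.
by case: h => -[-> ->]; field.
Qed.


Lemma pauli_sq (k : 'I_4) : pauli R k *m pauli R k = 1%:M.
Proof.
apply/matrixP => a b; rewrite mul2E.
case: k => [[|[|[|[|k]]]] hk] //; case: a => [[|[|a]] ha] //; case: b => [[|[|b]] hb] //;
  rewrite /pauli /= ?mxE /=; apply/eqP; rewrite eq_complex /=; apply/andP; split; apply/eqP; ring.
Qed.

Lemma pauli_rel (k j : 'I_4) (hk : k != 0) : exists eps : C,
  pauli R k *m pauli R j = eps *: (pauli R j *m pauli R k) /\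
  ((eps = 1 /\ kdelta R j 0 + kdelta R j k = 1) \/ (eps = -1 /\ kdelta R j 0 + kdelta R j k = 0)).
Proof.
exists (if (j == 0) || (j == k) then 1 else -1).
case: k hk => [[|[|[|[|k]]]] hk] // _; case: j => [[|[|[|[|j]]]] hj] //=; split.
all: try (rewrite /kdelta /=; first [by left; split; rewrite ?addr0 ?add0r | by right; split; rewrite ?addr0]).
all: apply/matrixP => a b; rewrite !(mul2E, mxE);
    case: a => [[|[|a]] ha] //; case: b => [[|[|b]] hb] //;
    rewrite /pauli /= ?mxE /=; apply/eqP; rewrite eq_complex /=; apply/andP; split; apply/eqP; ring.
Qed.

End F.

Theorem lemma3 (R : realType) (k j : 'I_4) (hk : k != 0 :> 'I_4)
    (A C : 'M[R[i]]_2) :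
  let B := pauli R j in
  let D := pauli R j in
  let c := (kdelta R j 0 + kdelta R j k) / 2 in
  Etheta (fun theta =>
    \tr (Wrot k theta *m A *m adj (Wrot k theta) *m B) *
    \tr (Wrot k theta *m C *m adj (Wrot k theta) *m D)) =
  (2^-1 + c) * \tr (A *m B) * \tr (C *m D) +
  (- 2^-1 + c) * \tr (A *m B *m pauli R k) * \tr (C *m D *m pauli R k).
Proof.
move=> B D c.
have [eps [hST hd]] := @pauli_rel R k j hk.
have hS := pauli_sq R k.
have [ha1 ha2] := @trfacts R _ _ A _ hS hST.
have [he1 he2] := @trfacts R _ _ C _ hS hST.
rewrite (@Etheta_trig R (\tr (A *m B) * \tr (C *m D))
  (\tr (pauli R k *m A *m pauli R k *m B) * \tr (pauli R k *m C *m pauli R k *m D))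
  (\tr (A *m B) * \tr (pauli R k *m C *m pauli R k *m D) + \tr (pauli R k *m A *m pauli R k *m B) * \tr (C *m D)
     - \tr (A *m pauli R k *m B - pauli R k *m A *m B) * \tr (C *m pauli R k *m D - pauli R k *m C *m D))
  ('i * (\tr (A *m B) * \tr (C *m pauli R k *m D - pauli R k *m C *m D) + \tr (A *m pauli R k *m B - pauli R k *m A *m B) * \tr (C *m D)))
  ('i * (\tr (pauli R k *m A *m pauli R k *m B) * \tr (C *m pauli R k *m D - pauli R k *m C *m D) + \tr (A *m pauli R k *m B - pauli R k *m A *m B) * \tr (pauli R k *m C *m pauli R k *m D)))); last first.
  move=> t. rewrite !(@trW R k hk) !rmorphXn !rmorphM; exact: pw.
rewrite /B /D ha1 ha2 he1 he2; exact: fin.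
Qed.
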